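(* Let $n\ge 2$, $\lambda\in[0,(n-1)^2/4]$, and let $h$, $d_0$ be as follows: $h:(0,\infty)\to\mathbb{R}$ solves $h''+(n-1)\tanh(d)h'=-\lambda h$, is positive and decreasing on $[d_0,\infty)$, and satisfies $h(d)<C_3e^{-rd}$ for $d>d_0$, where $r=\frac{n-1}{2}+\frac{n-1}{2}\sqrt{1-4\lambda/(n-1)^2}$. In the Poincaré ball model $B$, for $z\in\partial B$ and $\theta>0$ let $I=I(z,\theta,0)$ be the totally geodesic hyperball whose closure meets $\partial B$ exactly in the closed cap $\{y\in\partial B:\angle(y,z)\le\theta/2\}$, and let $w_I(x)=h(\sigma(x))/h(d_0)$, where $\sigma(x)$ is the hyperbolic distance from $x$ to $\partial I$ taken with positive sign on the side of $\partial I$ containing $0$. Then there exist constants $C_4>0$ and $\theta_1>0$ (independent of $z$) such that $$0<w_I(0)\le C_4\,\theta^{(n-1)/2}\quad\text{for all }0<\theta<\theta_1.$$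
   Context: The Poincaré ball model is $B=\{p\in\mathbb{R}^n:|p|<1\}$ with metric $\frac{4}{(1-|p|^2)^2}\delta_{ij}$ and ideal boundary $\partial B$; totally geodesic hyperballs are regions bounded by totally geodesic hyperspheres (Euclidean spheres orthogonal to $\partial B$ intersected with $B$). The function $x\mapsto h(\sigma(x))$ satisfies $-\Delta u=\lambda u$ where $\sigma$ ranges in $(0,\infty)$. *)

(* Defs.v *)
From Stdlib Require Import Reals Lra.
Open Scope R_scope.

(* Points of R^n are represented as functions nat -> R; only the
   coordinates 0..n-1 are ever used. *)
Definition pt := nat -> R.

Fixpoint sumn (k : nat) (f : nat -> R) : R :=
  match k with O => 0 | S k' => sumn k' f + f k' end.

Definition dot (n : nat) (x y : pt) : R := sumn n (fun i => x i * y i).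
Definition vsub (x y : pt) : pt := fun i => x i - y i.
Definition norm2 (n : nat) (x : pt) : R := dot n x x.
Definition enorm (n : nat) (x : pt) : R := sqrt (norm2 n x).
Definition origin : pt := fun _ => 0.

Definition inB (n : nat) (p : pt) : Prop := norm2 n p < 1.
Definition onDB (n : nat) (y : pt) : Prop := norm2 n y = 1.

(* Hyperbolic distance of the metric 4/(1-|p|^2)^2 delta_ij (closed form). *)
Definition arcosh (t : R) : R := ln (t + sqrt (t * t - 1)).
Definition hdist (n : nat) (x y : pt) : R :=
  arcosh (1 + 2 * norm2 n (vsub x y) / ((1 - norm2 n x) * (1 - norm2 n y))).

Definition angle (n : nat) (y z : pt) : R := acos (dot n y z).

(* A Euclidean sphere with centre c and radius rho > 0 orthogonal to dB:
   |c|^2 = 1 + rho^2. *)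
Definition orth_sphere (n : nat) (c : pt) (rho : R) : Prop :=
  0 < rho /\ norm2 n c = 1 + rho ^ 2.

Definition tg_hypersphere (n : nat) (c : pt) (rho : R) (p : pt) : Prop :=
  inB n p /\ enorm n (vsub p c) = rho.

Definition tg_hyperball (n : nat) (c : pt) (rho : R) (inner : bool) (p : pt) : Prop :=
  inB n p /\
  (if inner then enorm n (vsub p c) < rho else rho < enorm n (vsub p c)).

Definition in_closure (n : nat) (S : pt -> Prop) (y : pt) : Prop :=
  forall eps, 0 < eps -> exists p, S p /\ enorm n (vsub p y) < eps.

Definition is_hdist_to_set (n : nat) (S : pt -> Prop) (x : pt) (d : R) : Prop :=
  (forall p, S p -> d <= hdist n x p) /\
  (forall eps, 0 < eps -> exists p, S p /\ hdist n x p < d + eps).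

Definition is_sigma (n : nat) (c : pt) (rho : R) (x : pt) (s : R) : Prop :=
  exists d, is_hdist_to_set n (tg_hypersphere n c rho) x d /\
   (  ((enorm n (vsub x c) < rho <-> enorm n (vsub origin c) < rho) /\ s = d)
   \/ (~ (enorm n (vsub x c) < rho <-> enorm n (vsub origin c) < rho) /\ s = - d)).

(* Main.v *)
Require Import Defs.
From Stdlib Require Import Reals Lra Psatz.
Open Scope R_scope.

Lemma sumn_ext k f g : (forall i, f i = g i) -> sumn k f = sumn k g.
Proof. intros H; induction k; simpl; [reflexivity| rewrite IHk, H; reflexivity]. Qed.

Lemma sumn_lin3 k a b c f g h :
  sumn k (fun i => a * f i + b * g i + c * h i) = a * sumn k f + b * sumn k g + c * sumn k h.
Proof. induction k; simpl; [ring| rewrite IHk; ring]. Qed.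

Lemma sumn_ge0 k f : (forall i, 0 <= f i) -> 0 <= sumn k f.
Proof. intros H; induction k; simpl; [lra| specialize (H k); lra]. Qed.

Lemma norm2_ge0 n x : 0 <= norm2 n x.
Proof. unfold norm2, dot. apply sumn_ge0. intros; nra. Qed.

Lemma dot_sym n x y : dot n x y = dot n y x.
Proof. unfold dot; apply sumn_ext; intros; ring. Qed.

Lemma dot_lin n a b x y z :
  dot n (fun i => a * x i + b * y i) z = a * dot n x z + b * dot n y z.
Proof.
  unfold dot. transitivity (a * sumn n (fun i => x i * z i) + b * sumn n (fun i => y i * z i) + 0 * sumn n (fun i => 0)); [|ring].
  rewrite <- sumn_lin3. apply sumn_ext; intros; ring.
Qed.

Lemma norm2_lin n a b x y :
  norm2 n (fun i => a * x i + b * y i) = a*a * norm2 n x + 2*a*b * dot n x y + b*b*norm2 n y.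
Proof.
  unfold norm2, dot. rewrite <- sumn_lin3. apply sumn_ext; intros; ring.
Qed.

Lemma cs_amgm n x y t : 0 < t -> 2 * dot n x y <= t * norm2 n x + norm2 n y / t.
Proof.
  intros Ht. pose proof (norm2_ge0 n (fun i => 1 * x i + (- / t) * y i)) as H.
  rewrite norm2_lin in H.
  assert (E: t * (1 * 1 * norm2 n x + 2 * 1 * - / t * dot n x y + - / t * - / t * norm2 n y)
     = t * norm2 n x + norm2 n y / t - 2 * dot n x y) by (field; lra).
  assert (0 <= t * (1 * 1 * norm2 n x + 2 * 1 * - / t * dot n x y + - / t * - / t * norm2 n y)) by (apply Rmult_le_pos; lra).
  lra.
Qed.

Lemma sumn_two k f : (2 <= k)%nat -> (forall i, (2 <= i)%nat -> f i = 0) -> sumn k f = f 0%nat + f 1%nat.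
Proof.
  intros Hk Hf. induction Hk.
  - simpl. ring.
  - simpl. rewrite IHHk, (Hf m) by lia. ring.
Qed.

Lemma exists_orth n c : (2 <= n)%nat -> exists w, norm2 n w = 1 /\ dot n w c = 0.
Proof.
  intros Hn.
  destruct (Req_dec (c 0%nat * c 0%nat + c 1%nat * c 1%nat) 0) as [E|E].
  - exists (fun i => if Nat.eqb i 0 then 1 else 0). split.
    + unfold norm2, dot. rewrite sumn_two by (first [assumption | intros i Hi; destruct i; [lia|]; simpl; ring]).
      simpl. ring.
    + unfold dot. rewrite sumn_two by (first [assumption | intros i Hi; destruct i; [lia|]; simpl; ring]).
      simpl. nra.
  - set (L := sqrt (c 0%nat * c 0%nat + c 1%nat * c 1%nat)).
    assert (HL : L * L = c 0%nat * c 0%nat + c 1%nat * c 1%nat) by (apply sqrt_sqrt; nra).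
    assert (HL0 : 0 < L) by (apply sqrt_lt_R0; nra).
    exists (fun i => if Nat.eqb i 0 then c 1%nat / L else if Nat.eqb i 1 then - c 0%nat / L else 0). split.
    + unfold norm2, dot. rewrite sumn_two by (first [assumption | intros i Hi; destruct i as [|[|i]]; [lia|lia|]; simpl; ring]).
      simpl. transitivity ((c 0%nat * c 0%nat + c 1%nat * c 1%nat)/(L*L)); [field; lra|]. rewrite HL; field; lra.
    + unfold dot. rewrite sumn_two by (first [assumption | intros i Hi; destruct i as [|[|i]]; [lia|lia|]; simpl; ring]).
      simpl. field. lra.
Qed.

Lemma norm2_ext n x y : (forall i, x i = y i) -> norm2 n x = norm2 n y.
Proof. intros H; unfold norm2, dot; apply sumn_ext; intros; rewrite H; ring. Qed.

Lemma sqrt_lt_sq a r : 0 <= a -> 0 < r -> a < r * r -> sqrt a < r.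
Proof. intros. rewrite <- (sqrt_square r) by lra. apply sqrt_lt_1_alt. lra. Qed.
Lemma sq_lt_sqrt a r : 0 <= r -> r * r < a -> r < sqrt a.
Proof. intros. rewrite <- (sqrt_square r) by lra. apply sqrt_lt_1_alt. nra. Qed.

Lemma clos_gen n c rho y (inner : bool) :
  orth_sphere n c rho -> norm2 n y = 1 ->
  (if inner then 1 < dot n y c else dot n y c <= 0) ->
  in_closure n (tg_hyperball n c rho inner) y.
Proof.
  intros [Hr Hc] Hy Hd eps Heps.
  set (Y := dot n y c).
  assert (exists e, 0 < e /\ e < eps /\ e < 1 /\ (inner = true -> 1 < (1 - e) * Y)) as [e [He1 [He2 [He3 He4]]]].
  { destruct inner; simpl in Hd; fold Y in Hd.
    - exists (Rmin (eps/2) (Rmin (1/2) ((Y-1)/(2*Y)))).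
      assert (0 < (Y-1)/(2*Y)) by (unfold Rdiv; apply Rmult_lt_0_compat; [lra| apply Rinv_0_lt_compat; lra]).
      assert ((Y-1)/(2*Y) * Y = (Y-1)/2) by (field; lra).
      repeat split; try (unfold Rmin; repeat destruct Rle_dec; lra).
      intros _. assert (Rmin (eps / 2) (Rmin (1 / 2) ((Y - 1) / (2 * Y))) <= (Y-1)/(2*Y)) by
        (unfold Rmin; repeat destruct Rle_dec; lra). nra.
    - exists (Rmin (eps/2) (1/2)). repeat split; try (unfold Rmin; repeat destruct Rle_dec; lra). }
  exists (fun i => (1 - e) * y i + 0 * c i). split; [split|].
  - unfold inB. rewrite norm2_lin, Hy. nra.
  - unfold enorm. rewrite (norm2_ext n _ (fun i => (1-e) * y i + (-1) * c i)) by (intros; unfold vsub; ring).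
    pose proof (norm2_ge0 n (fun i => (1-e) * y i + (-1) * c i)) as Hnn.
    rewrite norm2_lin, Hy, Hc in Hnn. rewrite norm2_lin, Hy, Hc. fold Y in Hnn. fold Y. destruct inner.
    + apply sqrt_lt_sq; [lra | lra|].
      specialize (He4 eq_refl). nra.
    + simpl in Hd; fold Y in Hd. apply sq_lt_sqrt; [lra|]. nra.
  - unfold enorm. rewrite (norm2_ext n _ (fun i => (-e) * y i + 0 * c i)) by (intros; unfold vsub; ring).
    rewrite norm2_lin, Hy. apply sqrt_lt_sq; [nra|lra|nra].
Qed.

Lemma norm2_origin n : norm2 n origin = 0.
Proof. unfold norm2, dot, origin. induction n; simpl; [ring| rewrite IHn; ring]. Qed.

Lemma hdist_lb n c rho p : orth_sphere n c rho -> tg_hypersphere n c rho p ->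
  exp (- hdist n origin p) <= 2 * rho.
Proof.
  intros [Hr Hc] [Hp He].
  unfold inB in Hp.
  set (q := norm2 n p) in *. set (P := dot n p c).
  assert (Hq0 : 0 <= q) by apply norm2_ge0.
  assert (HN : norm2 n (vsub p c) = rho * rho).
  { unfold enorm in He. rewrite <- He. rewrite sqrt_sqrt; [ring| apply norm2_ge0]. }
  rewrite (norm2_ext n _ (fun i => 1 * p i + (-1) * c i)) in HN by (intros; unfold vsub; ring).
  rewrite norm2_lin, Hc in HN. fold q P in HN.
  assert (H1 : 1 + q = 2 * P) by nra.
  set (C := sqrt (1 + rho ^ 2)).
  assert (HC : C * C = 1 + rho^2) by (apply sqrt_sqrt; nra).
  assert (HC0 : 0 <= C) by apply sqrt_pos.
  assert (HCr : rho < C) by nra.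
  assert (HC1 : C <= 1 + rho) by nra.
  set (k := C - rho).
  assert (Hk : 0 < k) by (unfold k; lra).
  pose proof (cs_amgm n p c (C / k) ltac:(apply Rdiv_lt_0_compat; lra)) as Hcs.
  fold P q in Hcs. rewrite Hc in Hcs.
  assert (E : (1 + rho^2) / (C / k) = C * k) by (rewrite <- HC; field; lra).
  rewrite E in Hcs.
  assert (Hcs2 : k * (1 + q) <= C * q + C * k * k).
  { assert (C / k * q * k = C * q) by (field; lra). nra. }
  assert (Hqk : k * k <= q).
  { assert (Ek : C * k - 1 = - rho * k) by (unfold k; simpl in HC; nra). clear E Hcs. assert (Ekc : k - C = - rho) by (unfold k; ring). assert (T: rho * (q - k*k) >= 0) by nra. nra. }
  assert (Hfin : 1 - q <= 2 * rho) by (unfold k in *; nra).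
  unfold hdist, arcosh. rewrite norm2_origin.
  replace (norm2 n (vsub origin p)) with q by (unfold q, norm2, dot; apply sumn_ext; intros; unfold vsub, origin; ring).
  fold q.   set (X := 1 + 2 * q / ((1 - 0) * (1 - q))).
  assert (HX : X * (1 - q) = 1 + q) by (unfold X; field; lra).
  set (S := sqrt (X * X - 1)).
  assert (HS : 0 <= S) by apply sqrt_pos.
  assert (HX1 : 1 <= X) by (unfold X; assert (0 <= 2 * q / ((1 - 0) * (1 - q))) by (unfold Rdiv; apply Rmult_le_pos; [lra| apply Rlt_le, Rinv_0_lt_compat; nra]); lra).
  rewrite exp_Ropp, exp_ln by lra.
  assert (/ (X + S) <= 1 - q).
  { apply (Rmult_le_reg_l (X + S)); [lra|]. rewrite Rinv_r by lra. nra. }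
  lra.
Qed.

Lemma exp_le x y : x <= y -> exp x <= exp y.
Proof. intros [H|H]; [left; apply exp_increasing; auto| subst; lra]. Qed.
Lemma ln_le' x y : 0 < x -> x <= y -> ln x <= ln y.
Proof. intros Hx [H|H]; [left; apply ln_increasing; auto| subst; lra]. Qed.
Lemma cos_le1 x : cos x <= 1.
Proof. pose proof (sin2_cos2 x). unfold Rsqr in H. nra. Qed.

Lemma cap_dot n z th y : 0 < th < 1 -> angle n y z <= th / 2 -> cos (th / 2) <= dot n y z.
Proof.
  intros Ht Ha. unfold angle in Ha. pose proof PI2_1.
  set (x := dot n y z) in *.
  destruct (Rle_dec x (-1)) as [H1|H1].
  - unfold acos in Ha. destruct (Rle_dec x (-1)); [lra|contradiction].
  - destruct (Rle_dec 1 x) as [H2|H2].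
    + pose proof (cos_le1 (th/2)). lra.
    + rewrite <- (cos_acos x) by lra. pose proof (acos_bound x).
      apply cos_decr_1; lra.
Qed.

Lemma rho_bound n z th c rho inner : (2 <= n)%nat -> onDB n z -> 0 < th < 1 ->
  orth_sphere n c rho ->
  (forall y, onDB n y ->
     (in_closure n (tg_hyperball n c rho inner) y <-> angle n y z <= th / 2)) ->
  rho <= th.
Proof.
  intros Hn Hz Ht Horth Hcap. pose proof Horth as [Hr Hc].
  unfold onDB in Hz.
  set (k := cos (th / 2)).
  assert (Hk : 1 - th * th / 8 <= k).
  { pose proof PI2_1. destruct (cos_bound (th/2) 0 ltac:(lra) ltac:(lra)) as [H1 _].
    unfold cos_approx, cos_term in H1. simpl in H1. unfold k. lra. }
  assert (Hk1 : k <= 1) by apply cos_le1.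
  assert (Hcl : forall y, norm2 n y = 1 -> in_closure n (tg_hyperball n c rho inner) y -> k <= dot n y z).
  { intros y Hy Hin. apply cap_dot; [lra|]. apply Hcap; auto. }
  destruct (exists_orth n c Hn) as [w [Hw Hwc]].
  destruct inner.
  - set (C := sqrt (1 + rho^2)).
    assert (HC : C * C = 1 + rho^2) by (apply sqrt_sqrt; nra).
    assert (HC0 : 0 <= C) by apply sqrt_pos.
    assert (HC1 : 1 < C) by nra.
    assert (Hcz : dot n c z <= C).
    { pose proof (cs_amgm n c z (/ C) ltac:(apply Rinv_0_lt_compat; lra)) as H.
      rewrite Hc, Hz in H. rewrite <- HC in H.
      assert (/ C * (C * C) + 1 / / C = 2 * C) by (field; lra). lra. }
    assert (HkC : k * C <= 1).
    { destruct (Rle_dec (k * C) 1) as [|Hgt]; [auto|exfalso].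
      set (a := (k + / C) / 2).
      assert (HiC : / C * C = 1) by (field; lra).
      assert (Ha1 : / C < a) by (unfold a; nra).
      assert (Ha2 : a < k) by (unfold a; nra).
      assert (Hia : 0 < / C) by (apply Rinv_0_lt_compat; lra).
      set (b := sqrt (1 - a * a)).
      assert (Hb : b * b = 1 - a * a) by (apply sqrt_sqrt; nra).
      set (al := a / C).
      assert (Hal : al * C = a) by (unfold al; field; lra).
      assert (Hy : forall bb, bb * bb = 1 - a * a -> k <= al * dot n c z + bb * dot n w z).
      { intros bb Hbb.
        rewrite <- dot_lin. apply Hcl.
        - rewrite norm2_lin, Hc, Hw, (dot_sym n c w), Hwc. rewrite <- HC. nra.
        - apply clos_gen; [exact Horth| rewrite norm2_lin, Hc, Hw, (dot_sym n c w), Hwc; rewrite <- HC; nra |]. simpl. rewrite dot_lin, Hwc. change (dot n c c) with (norm2 n c). rewrite Hc. rewrite <- HC. nra. }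
      pose proof (Hy b Hb). pose proof (Hy (-b) ltac:(nra)).
      assert (al * dot n c z <= a) by (rewrite <- Hal; apply Rmult_le_compat_l; [unfold al; apply Rmult_le_pos; lra| auto]).
      lra. }
    assert (HK : 0 < k) by nra.
    assert (Hr2 : (1 + rho^2) * (k * k) <= 1).
    { rewrite <- HC. assert (0 <= k * C) by (apply Rmult_le_pos; lra).
      replace (C * C * (k * k)) with ((k * C) * (k * C)) by ring. nra. }
    destruct (Rle_dec rho th) as [|Hgt]; [auto|exfalso].
    assert ((1 + th * th) * (k * k) < 1 + 0) by nra.
    assert ((1 + th * th) * ((1 - th * th / 8) * (1 - th * th / 8)) <= (1 + th * th) * (k * k)).
    { apply Rmult_le_compat_l; [nra|]. apply Rmult_le_compat; nra. }
    assert (Tt : 0 < th * th < 1) by nra. assert (Tt2 : th*th*(th*th) <= th*th) by nra. assert (Tt3 : 0 <= th*th*(th*th)*(th*th)) by nra. nra.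
  - exfalso.
    assert (k > 0) by nra.
    assert (H1 : k <= dot n w z).
    { apply Hcl; auto. apply clos_gen; auto. simpl. lra. }
    assert (H2 : k <= dot n (fun i => (-1) * w i + 0 * w i) z).
    { apply Hcl.
      - rewrite norm2_lin, Hw. ring.
      - apply clos_gen; [exact Horth| rewrite norm2_lin, Hw; ring |]. simpl. rewrite dot_lin, Hwc. lra. }
    rewrite dot_lin in H2. lra.
Qed.

Theorem mainTheorem6 :
  forall (n : nat) (lam : R) (h : R -> R) (d0 C3 : R),
  (2 <= n)%nat ->
  0 <= lam <= (INR n - 1) ^ 2 / 4 ->
  0 < d0 ->
  (* h solves h'' + (n-1) tanh(d) h' = - lam h on (0, oo) *)
  (exists h1 h2 : R -> R, forall d, 0 < d ->
      derivable_pt_lim h d (h1 d) /\ derivable_pt_lim h1 d (h2 d) /\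
      h2 d + (INR n - 1) * tanh d * h1 d = - lam * h d) ->
  (* h positive and decreasing on [d0, oo) *)
  (forall d, d0 <= d -> 0 < h d) ->
  (forall d e, d0 <= d -> d <= e -> h e <= h d) ->
  (* exponential decay bound *)
  (forall d, d0 < d ->
     h d < C3 * exp (- ((INR n - 1) / 2
                        + (INR n - 1) / 2 * sqrt (1 - 4 * lam / (INR n - 1) ^ 2)) * d)) ->
  exists C4 theta1 : R, 0 < C4 /\ 0 < theta1 /\
    forall (z : pt) (theta : R), onDB n z -> 0 < theta < theta1 ->
    forall (c : pt) (rho : R) (inner : bool),
      orth_sphere n c rho ->
      (* I = I(z,theta,0): closure of I meets dB exactly in the closed cap *)
      (forall y, onDB n y ->
         (in_closure n (tg_hyperball n c rho inner) y <-> angle n y z <= theta / 2)) ->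
      forall s, is_sigma n c rho origin s ->
        0 < h s / h d0 /\ h s / h d0 <= C4 * Rpower theta ((INR n - 1) / 2).
Proof.
  intros n lam h d0 C3 Hn Hlam Hd0 _ Hpos Hdec Hbd.
  set (a := (INR n - 1) / 2) in *.
  assert (Ha : 1/2 <= a).
  { unfold a. pose proof (le_INR _ _ Hn). simpl in H. lra. }
  set (SQ := sqrt (1 - 4 * lam / (INR n - 1) ^ 2)) in *.
  assert (HSQ : 0 <= SQ) by apply sqrt_pos.
  assert (HC3 : 0 < C3).
  { pose proof (Hpos (d0 + 1) ltac:(lra)). pose proof (Hbd (d0 + 1) ltac:(lra)).
    pose proof (exp_pos (- (a + a * SQ) * (d0 + 1))). nra. }
  pose proof (Hpos d0 ltac:(lra)) as Hh0.
  assert (HP2 : 0 < Rpower 2 a) by (unfold Rpower; apply exp_pos).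
  exists (C3 * Rpower 2 a / h d0), (Rmin 1 (exp (- d0) / 4)).
  split; [apply Rdiv_lt_0_compat; [nra|lra]|].
  pose proof (exp_pos (- d0)) as Hed.
  split; [unfold Rmin; destruct Rle_dec; lra|].
  intros z th Hz Hth c rho inner Horth Hcap s Hs.
  assert (Hth1 : th < 1) by (unfold Rmin in Hth; destruct Rle_dec in Hth; lra).
  assert (Hth2 : th < exp (- d0) / 4) by (unfold Rmin in Hth; destruct Rle_dec in Hth; lra).
  pose proof (rho_bound n z th c rho inner Hn Hz ltac:(lra) Horth Hcap) as Hrt.
  pose proof Horth as [Hr _].
  destruct Hs as [d [[Hd1 Hd2] Hsd]].
  assert (Hsd' : s = d) by (destruct Hsd as [[_ E]|[F _]]; [auto| exfalso; apply F; tauto]).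
  subst s.
  assert (Hdl : - ln (2 * rho) <= d).
  { destruct (Rle_dec (- ln (2 * rho)) d) as [|Hgt]; [auto|exfalso].
    destruct (Hd2 (- ln (2 * rho) - d) ltac:(lra)) as [p [Hp Hlt]].
    pose proof (hdist_lb n c rho p Horth Hp) as He.
    assert (ln (exp (- hdist n origin p)) <= ln (2 * rho)) by (apply ln_le'; [apply exp_pos|auto]).
    rewrite ln_exp in H. lra. }
  assert (Hln : ln (2 * rho) <= ln (2 * th)) by (apply ln_le'; lra).
  assert (Hln2 : ln (2 * th) < - d0).
  { rewrite <- (ln_exp (- d0)). apply ln_increasing; lra. }
  assert (Hdd : d0 < d) by lra.
  pose proof (Hpos d ltac:(lra)) as Hhd.
  split; [apply Rdiv_lt_0_compat; lra|].
  pose proof (Hbd d Hdd) as Hb.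
  assert (E1 : exp (- (a + a * SQ) * d) <= Rpower (2 * th) a).
  { unfold Rpower. apply exp_le.
    assert (0 <= a * SQ * d) by (apply Rmult_le_pos; [apply Rmult_le_pos|]; lra).
    assert (a * (- d) <= a * ln (2 * th)) by (apply Rmult_le_compat_l; lra).
    nra. }
  rewrite <- Rpower_mult_distr in E1 by lra.
  assert (0 < Rpower th a) by (unfold Rpower; apply exp_pos).
  assert (C3 * exp (- (a + a * SQ) * d) <= C3 * (Rpower 2 a * Rpower th a)) by (apply Rmult_le_compat_l; lra).
  assert (Hfin : h d <= C3 * Rpower 2 a * Rpower th a) by lra.
  replace (C3 * Rpower 2 a / h d0 * Rpower th a) with ((C3 * Rpower 2 a * Rpower th a) / h d0) by (field; lra).
  unfold Rdiv. apply Rmult_le_compat_r; [apply Rlt_le, Rinv_0_lt_compat; lra| exact Hfin].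
Qed.
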